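(* Let $k\ge 3$ be an integer such that every set of $k-1$ distinct positive integers has the LR property. Let $p$ be a positive integer with the following property: for all $v_1,\ldots,v_k\in\{0,1,\ldots,(k+1)p-1\}$ such that (i) for every subset $S\subseteq\{v_1,\ldots,v_k\}$ of size $k-1$ we have $\gcd(S\cup\{(k+1)p\})=1$, and (ii) no $v_i$ is divisible by $p$, there exists $t\in\{0,1,\ldots,(k+1)p-1\}$ such that $\left\|\frac{t v_i}{(k+1)p}\right\|\ge\frac{1}{k+1}$ for all $i$. Then for every set $\{v_1,\ldots,v_k\}$ of $k$ distinct integers that does not have the LR property, $p$ divides $\prod_{i=1}^k v_i$.
   Context: For a real number $x$, $\|x\|$ denotes the distance from $x$ to the nearest integer. A finite set $S$ of $m$ integers has the LR (lonely runner) property if there exists a real $t$ such that $\|tv\|\ge \frac{1}{m+1}$ for all $v\in S$. The hypothesis ''every set of $k-1$ distinct positive integers has the LR property'' is what the paper calls ''the lonely runner conjecture holds for $k-1$''. *)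

(* Defs.v *)
From Stdlib Require Import Reals ZArith List.
Import ListNotations.
Open Scope R_scope.

(* ||x|| : distance from x to the nearest integer.
   up x is the unique integer with x < up x <= x + 1 (i.e. ceil x, or x+1 if
   x is an integer), so min(up x - x, x - (up x - 1)) is the distance to the
   nearest integer. *)
Definition dnear (x : R) : R :=
  Rmin (IZR (up x) - x) (x - (IZR (up x) - 1)).

Definition LR_property (S : list Z) : Prop :=
  exists t : R, forall v, In v S ->
    dnear (t * IZR v) >= 1 / (INR (length S) + 1).

Definition LRC_holds (n : nat) : Prop :=
  forall S : list Z, NoDup S -> length S = n ->
    (forall v, In v S -> (0 < v)%Z) -> LR_property S.

Definition remove_at {A : Type} (i : nat) (l : list A) : list A :=
  firstn i l ++ skipn (S i) l.

Definition gcd_with (N : Z) (l : list Z) : Z := fold_right Z.gcd N l.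

Definition good_p (k : nat) (p : Z) : Prop :=
  let N := (Z.of_nat (S k) * p)%Z in
  forall v : list Z, length v = k ->
    (forall x, In x v -> (0 <= x < N)%Z) ->
    (forall i, (i < k)%nat -> gcd_with N (remove_at i v) = 1%Z) ->
    (forall x, In x v -> ~ (p | x)%Z) ->
    exists t : Z, (0 <= t < N)%Z /\
      forall x, In x v ->
        dnear (IZR (t * x) / IZR N) >= 1 / (INR k + 1).

(* Main.v *)
Require Import Defs.
From Stdlib Require Import Reals ZArith List Lia Lra FinFun Classical.
Open Scope R_scope.

Definition Pd (c x : R) : Prop := forall n : Z, c <= Rabs (x - IZR n).

Lemma dnear_Pd x c : dnear x >= c <-> Pd c x.
Proof.
  unfold dnear, Pd. destruct (archimed x) as [H1 H2]. split.
  - intros H n. assert (Ha: c <= IZR (up x) - x /\ c <= x - (IZR (up x) - 1)).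
    { unfold Rmin in H. destruct (Rle_dec _ _); lra. }
    destruct (Z_le_gt_dec (up x) n) as [Hn|Hn].
    + apply IZR_le in Hn. unfold Rabs; destruct (Rcase_abs _); lra.
    + assert (Hn': (n <= up x - 1)%Z) by lia. apply IZR_le in Hn'.
      rewrite minus_IZR in Hn'. unfold Rabs; destruct (Rcase_abs _); lra.
  - intros H. specialize (H (up x)) as Ha. specialize (H (up x - 1)%Z) as Hb.
    rewrite minus_IZR in Hb.
    unfold Rabs in Ha, Hb. destruct (Rcase_abs (x - IZR (up x))); destruct (Rcase_abs (x - (IZR (up x) - IZR 1))); try lra.
    apply Rle_ge. apply Rmin_glb; simpl in *; lra.
Qed.

Lemma Pd_shift c x m : Pd c x -> Pd c (x + IZR m).
Proof.
  intros H n. specialize (H (n - m)%Z). rewrite minus_IZR in H.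
  replace (x + IZR m - IZR n) with (x - (IZR n - IZR m)) by ring. auto.
Qed.

Lemma Pd_opp c x : Pd c x -> Pd c (- x).
Proof.
  intros H n. specialize (H (- n)%Z). rewrite opp_IZR in H.
  replace (- x - IZR n) with (- (x - - IZR n)) by ring. rewrite Rabs_Ropp. auto.
Qed.

Lemma Pd_mono c c' x : c' <= c -> Pd c x -> Pd c' x.
Proof. intros H1 H2 n. specialize (H2 n). lra. Qed.

Lemma gcd_with_div_N N l : (gcd_with N l | N)%Z.
Proof.
  induction l; simpl. apply Z.divide_refl.
  eapply Z.divide_trans; [apply Z.gcd_divide_r | exact IHl].
Qed.

Lemma gcd_with_div_el N l x : In x l -> (gcd_with N l | x)%Z.
Proof.
  induction l; simpl; intros H. destruct H.
  destruct H as [->|H]. apply Z.gcd_divide_l.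
  eapply Z.divide_trans; [apply Z.gcd_divide_r | auto].
Qed.

Lemma gcd_with_greatest N l d : (d | N)%Z -> (forall x, In x l -> (d | x)%Z) -> (d | gcd_with N l)%Z.
Proof.
  induction l; simpl; intros H1 H2. auto.
  apply Z.gcd_greatest; auto.
Qed.

Lemma gcd_with_nonneg N l : (0 <= N)%Z -> (0 <= gcd_with N l)%Z.
Proof. induction l; simpl; intros; auto. apply Z.gcd_nonneg. Qed.

Lemma prod_in x l : In x l -> (x | fold_right Z.mul 1 l)%Z.
Proof.
  induction l; simpl; intros H. destruct H.
  destruct H as [->|H]. apply Z.divide_mul_l, Z.divide_refl.
  apply Z.divide_mul_r; auto.
Qed.

Lemma prod_map_div (f : Z -> Z) l : (forall x, In x l -> (f x | x)%Z) ->
  (fold_right Z.mul 1 (map f l) | fold_right Z.mul 1 l)%Z.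
Proof.
  induction l; simpl; intros H. apply Z.divide_refl.
  destruct (H a (or_introl eq_refl)) as [q1 Hq1].
  destruct IHl as [q2 Hq2]; auto.
  exists (q1 * q2)%Z. rewrite Hq1, Hq2 at 1. ring.
Qed.

Lemma in_remove_at {A} (l : list A) i x : In x (remove_at i l) -> In x l.
Proof.
  revert i; induction l; intros i; unfold remove_at in *; destruct i; simpl; auto.
  intros [H|H]; auto. right. eapply IHl; eauto.
Qed.

Lemma in_split_at (l : list Z) i x : (i < length l)%nat -> In x l ->
  x = nth i l 0%Z \/ In x (remove_at i l).
Proof.
  revert i; induction l; intros i Hi Hx; simpl in *. lia.
  unfold remove_at in *; destruct i; simpl.
  - destruct Hx; auto.
  - destruct Hx as [->|Hx]; auto. destruct (IHl i ltac:(lia) Hx); auto.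
Qed.

Lemma length_remove_at {A} (l : list A) i : (i < length l)%nat ->
  length (remove_at i l) = (length l - 1)%nat.
Proof.
  revert i; induction l; intros i Hi; simpl in *. lia.
  unfold remove_at in *; destruct i; simpl. lia.
  rewrite IHl; lia.
Qed.

Lemma remove_at_map {A B} (f : A -> B) l i : remove_at i (map f l) = map f (remove_at i l).
Proof.
  unfold remove_at. rewrite map_app, firstn_map, skipn_map. reflexivity.
Qed.

Lemma sum_ge (T : list Z) x : (forall y, In y T -> 0 < y)%Z -> In x T -> (x <= fold_right Z.add 0 T)%Z.
Proof.
  assert (Hnn: forall L, (forall y, In y L -> 0 < y)%Z -> (0 <= fold_right Z.add 0 L)%Z).
  { intros L; induction L as [|b L IHL]; simpl; intros HL; [lia|].
    specialize (HL b (or_introl eq_refl)) as Hb.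
    assert (0 <= fold_right Z.add 0 L)%Z by auto. lia. }
  induction T; simpl; intros H Hx. destruct Hx.
  destruct Hx as [->|Hx].
  - assert (0 <= fold_right Z.add 0 T)%Z by auto. lia.
  - specialize (H a (or_introl eq_refl)) as Ha. assert (x <= fold_right Z.add 0 T)%Z by auto. lia.
Qed.

Lemma pad (n : nat) (L : list Z) : (forall x, In x L -> 0 < x)%Z -> (length L <= n)%nat ->
  exists T, NoDup T /\ length T = n /\ (forall x, In x T -> 0 < x)%Z /\ (forall x, In x L -> In x T).
Proof.
  revert n; induction L as [|a L IH]; intros n Hpos Hlen.
  - exists (map (fun i => Z.of_nat (S i)) (seq 0 n)). split; [|split; [|split]].
    + apply Injective_map_NoDup. intros x y H. lia. apply seq_NoDup.
    + rewrite length_map, length_seq. auto.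
    + intros x Hx. apply in_map_iff in Hx. destruct Hx as [i [<- _]]. lia.
    + intros x [].
  - destruct n as [|n]; simpl in Hlen. lia.
    destruct (IH n) as [T' [H1 [H2 [H3 H4]]]]; [intros; apply Hpos; simpl; auto | lia |].
    destruct (in_dec Z.eq_dec a T') as [Ha|Ha].
    + exists ((1 + fold_right Z.add 0 T')%Z :: T'). split; [|split; [|split]].
      * constructor; auto. intros Hin. pose proof (sum_ge T' _ H3 Hin). lia.
      * simpl; auto.
      * intros x [<-|Hx]; auto. pose proof (sum_ge T' _ H3 Ha). specialize (H3 a Ha). lia.
      * intros x [<-|Hx]; simpl; auto.
    + exists (a :: T'). split; [|split; [|split]].
      * constructor; auto.
      * simpl; auto.
      * intros x [<-|Hx]; auto. apply Hpos; simpl; auto.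
      * intros x [<-|Hx]; simpl; auto.
Qed.

Lemma core k p v : (3 <= k)%nat -> LRC_holds (k - 1) -> (0 < p)%Z -> good_p k p ->
  length v = k -> ~ LR_property v -> (forall x, In x v -> x <> 0%Z) ->
  (forall x, In x v -> ~ (p | x)%Z) ->
  (forall d, (1 < d)%Z -> (forall x, In x v -> (d | x)%Z) -> False) -> False.
Proof.
  intros Hk HLRC Hp Hg Hlen HnLR Hnz Hnp Hgcd.
  unfold good_p in Hg. cbv zeta in Hg.
  set (N := (Z.of_nat (S k) * p)%Z) in *.
  assert (HN : (0 < N)%Z) by (unfold N; lia).
  assert (HpN : (p | N)%Z) by (exists (Z.of_nat (S k)); reflexivity).
  assert (Hk3 : 3 <= INR k) by (replace 3 with (INR 3) by (simpl; ring); apply le_INR; lia).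
  assert (Hdm : forall d x, (d | N)%Z -> (d | x mod N)%Z -> (d | x)%Z).
  { intros d x H1 H2. rewrite (Z.div_mod x N) by lia.
    apply Z.divide_add_r; auto. apply Z.divide_mul_l; auto. }
  set (w := map (fun x => (x mod N)%Z) v).
  destruct (Hg w) as [t [Ht Hall]].
  - unfold w; rewrite length_map; auto.
  - intros x Hx. unfold w in Hx. apply in_map_iff in Hx. destruct Hx as [y [<- _]].
    apply Z.mod_pos_bound; lia.
  - intros i Hi. unfold w. rewrite remove_at_map.
    set (S := remove_at i v).
    set (d := gcd_with N (map (fun x => (x mod N)%Z) S)).
    assert (HdN : (d | N)%Z) by apply gcd_with_div_N.
    assert (Hd0 : (0 <= d)%Z) by (apply gcd_with_nonneg; lia).
    assert (Hdn0 : d <> 0%Z) by (intro E; rewrite E in HdN; apply Z.divide_0_l in HdN; lia).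
    destruct (Z.eq_dec d 1) as [E|E]; auto. exfalso.
    assert (Hd1 : (1 < d)%Z) by lia.
    assert (HdS : forall x, In x S -> (d | x)%Z).
    { intros x Hx. apply Hdm; auto. apply gcd_with_div_el. apply in_map_iff. eauto. }
    assert (HSv : forall x, In x S -> In x v) by (intros x; apply in_remove_at).
    set (c := nth i v 0%Z).
    assert (Hiv : (i < length v)%nat) by lia.
    assert (Hdc : ~ (d | c)%Z).
    { intro H. apply (Hgcd d Hd1). intros x Hx.
      destruct (in_split_at v i x Hiv Hx) as [->|Hx']; auto. }
    destruct (pad (k - 1) (map Z.abs S)) as [T [HTnd [HTlen [HTpos HTin]]]].
    { intros x Hx. apply in_map_iff in Hx. destruct Hx as [y [<- Hy]].
      specialize (Hnz y (HSv y Hy)). lia. }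
    { rewrite length_map. unfold S. rewrite length_remove_at; lia. }
    destruct (HLRC T HTnd HTlen HTpos) as [t0 Ht0].
    assert (HS : forall x, In x S -> Pd (1 / INR k) (t0 * IZR x)).
    { intros x Hx. pose proof (Ht0 (Z.abs x) (HTin _ (in_map _ _ _ Hx))) as Ha.
      rewrite HTlen in Ha. apply dnear_Pd in Ha.
      replace (INR (k - 1) + 1) with (INR k) in Ha by (rewrite minus_INR by lia; simpl (INR 1); ring).
      destruct (Z_le_gt_dec 0 x).
      - rewrite Z.abs_eq in Ha by lia. auto.
      - rewrite Z.abs_neq, opp_IZR in Ha by lia.
        replace (t0 * IZR x) with (- (t0 * - IZR x)) by ring. apply Pd_opp; auto. }
    set (g' := Z.gcd c d).
    assert (Hg'0 : (0 < g')%Z).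
    { pose proof (Z.gcd_nonneg c d). assert (g' <> 0%Z).
      { intro E'. apply Z.gcd_eq_0 in E'. lia. } unfold g' in *; lia. }
    destruct (Z.gcd_divide_l c d) as [c' Hc'].
    destruct (Z.gcd_divide_r c d) as [e He].
    fold g' in Hc', He.
    assert (Hce : Z.gcd c' e = 1%Z).
    { assert (E' : g' = (Z.gcd c' e * Z.abs g')%Z).
      { rewrite <- Z.gcd_mul_mono_r, <- Hc', <- He. reflexivity. }
      rewrite Z.abs_eq in E' by lia. nia. }
    assert (He1 : (1 < e)%Z).
    { assert (0 < e)%Z by nia. destruct (Z.eq_dec e 1) as [E1|E1]; [|lia].
      exfalso. apply Hdc. rewrite He, E1, Z.mul_1_l. apply Z.gcd_divide_l. }
    destruct (Z.gcd_bezout c' e 1%Z Hce) as [a [b Hab]].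
    set (y := t0 * IZR c).
    set (m := up ((1/2 - y) * IZR e - 1/2)).
    destruct (archimed ((1/2 - y) * IZR e - 1/2)) as [Hm1 Hm2]. fold m in Hm1, Hm2.
    set (j := (a * m)%Z).
    apply HnLR. exists (t0 + IZR j / IZR d). intros x Hx. rewrite Hlen. apply dnear_Pd.
    assert (HeR : 2 <= IZR e) by (apply IZR_le; lia).
    assert (HdR : IZR d <> 0) by (apply not_0_IZR; lia).
    assert (Hg'R : IZR g' <> 0) by (apply not_0_IZR; lia).
    destruct (in_split_at v i x Hiv Hx) as [Hxc|HxS].
    + fold c in Hxc. subst x.
      apply Pd_mono with (1/4).
      { unfold Rdiv; rewrite !Rmult_1_l. apply Rinv_le_contravar; lra. }
      replace ((t0 + IZR j / IZR d) * IZR c) with ((y + IZR m / IZR e) + IZR (- (m * b))).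
      2:{ unfold j, y. rewrite Hc', He, !mult_IZR, opp_IZR, mult_IZR.
          assert (Hab' : IZR a * IZR c' = 1 - IZR b * IZR e).
          { rewrite <- !mult_IZR, <- minus_IZR. f_equal. lia. }
          rewrite Rmult_plus_distr_r.
          replace (IZR a * IZR m / (IZR e * IZR g') * (IZR c' * IZR g'))
            with (IZR m * (IZR a * IZR c') / IZR e) by (field; lra).
          rewrite Hab'. field. lra. }
      apply Pd_shift. intros n.
      assert (Hb1 : 1/4 <= y + IZR m / IZR e).
      { assert (IZR m / IZR e > ((1/2 - y) * IZR e - 1/2) / IZR e) by
          (apply Rmult_gt_compat_r; [apply Rinv_0_lt_compat; lra | lra]).
        replace (((1/2 - y) * IZR e - 1/2) / IZR e) with (1/2 - y - 1/(2 * IZR e)) in H by (field; lra).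
        assert (1/(2 * IZR e) <= 1/4).
        { unfold Rdiv; rewrite !Rmult_1_l. apply Rinv_le_contravar; lra. }
        lra. }
      assert (Hb2 : y + IZR m / IZR e <= 3/4).
      { assert (IZR m / IZR e <= ((1/2 - y) * IZR e - 1/2 + 1) / IZR e).
        { unfold Rdiv. apply Rmult_le_compat_r; [left; apply Rinv_0_lt_compat; lra | lra]. }
        replace (((1/2 - y) * IZR e - 1/2 + 1) / IZR e) with (1/2 - y + 1/(2 * IZR e)) in H by (field; lra).
        assert (1/(2 * IZR e) <= 1/4).
        { unfold Rdiv; rewrite !Rmult_1_l. apply Rinv_le_contravar; lra. }
        lra. }
      destruct (Z_le_gt_dec n 0) as [Hn|Hn].
      * apply IZR_le in Hn. unfold Rabs; destruct (Rcase_abs _); lra.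
      * assert (Hn' : (1 <= n)%Z) by lia. apply IZR_le in Hn'. unfold Rabs; destruct (Rcase_abs _); lra.
    + destruct (HdS x HxS) as [q Hq].
      replace ((t0 + IZR j / IZR d) * IZR x) with (t0 * IZR x + IZR (j * q)).
      2:{ rewrite Hq, !mult_IZR. field. auto. }
      apply Pd_shift. apply Pd_mono with (1 / INR k); auto.
      unfold Rdiv; rewrite !Rmult_1_l. apply Rinv_le_contravar; lra.
  - intros x Hx Hpx. unfold w in Hx. apply in_map_iff in Hx. destruct Hx as [y [<- Hy]].
    apply (Hnp y Hy). apply Hdm; auto.
  - apply HnLR. exists (IZR t / IZR N). intros x Hx. rewrite Hlen. apply dnear_Pd.
    pose proof (Hall (x mod N)%Z (in_map _ _ _ Hx)) as Ha. apply dnear_Pd in Ha.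
    replace (IZR t / IZR N * IZR x) with (IZR (t * (x mod N)) / IZR N + IZR (t * (x / N))).
    + apply Pd_shift; auto.
    + assert (Ex : IZR x = IZR N * IZR (x / N) + IZR (x mod N)).
      { rewrite <- mult_IZR, <- plus_IZR, <- Z.div_mod; auto; lia. }
      rewrite Ex, !mult_IZR. field. apply not_0_IZR; lia.
Qed.

Theorem lemma5 (k : nat) (p : Z) :
  (3 <= k)%nat ->
  LRC_holds (k - 1) ->
  (0 < p)%Z ->
  good_p k p ->
  forall v : list Z, NoDup v -> length v = k ->
    ~ LR_property v ->
    (p | fold_right Z.mul 1%Z v)%Z.
Proof.
  intros Hk HLRC Hp Hg v Hnd Hlen HnLR.
  destruct (classic (p | fold_right Z.mul 1%Z v)%Z) as [H|H]; auto. exfalso.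
  assert (Hnz : forall x, In x v -> x <> 0%Z).
  { intros x Hx E. subst x. apply H. pose proof (prod_in 0 v Hx) as H0.
    apply Z.divide_0_l in H0. rewrite H0. apply Z.divide_0_r. }
  set (g := gcd_with 0 v).
  assert (Hgx : forall x, In x v -> (g | x)%Z) by (intros; apply gcd_with_div_el; auto).
  assert (Hg0 : (0 < g)%Z).
  { assert (0 <= g)%Z by (apply gcd_with_nonneg; lia).
    assert (Hin : In (nth 0 v 0%Z) v) by (apply nth_In; lia).
    assert (g <> 0%Z); [|lia]. intro E. pose proof (Hgx _ Hin) as Hd. rewrite E in Hd.
    apply Z.divide_0_l in Hd. exact (Hnz _ Hin Hd). }
  assert (Hux : forall x, In x v -> x = (g * (x / g))%Z).
  { intros x Hx. destruct (Hgx x Hx) as [q Hq]. rewrite Hq, Z.div_mul by lia. lia. }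
  apply (core k p (map (fun x => (x / g)%Z) v) Hk HLRC Hp Hg).
  - rewrite length_map; auto.
  - intros [t Ht]. apply HnLR. exists (t / IZR g). intros x Hx.
    pose proof (Ht (x / g)%Z (in_map _ _ _ Hx)) as Ha. rewrite length_map in Ha.
    assert (E : IZR x = IZR g * IZR (x / g)) by (rewrite <- mult_IZR; f_equal; apply Hux; auto).
    rewrite E. replace (t / IZR g * (IZR g * IZR (x / g))) with (t * IZR (x / g)); auto.
    field. apply not_0_IZR; lia.
  - intros y Hy E. apply in_map_iff in Hy. destruct Hy as [x [<- Hx]].
    apply (Hnz x Hx). rewrite (Hux x Hx), E. ring.
  - intros y Hy Hpy. apply in_map_iff in Hy. destruct Hy as [x [<- Hx]].
    apply H. eapply Z.divide_trans; [|apply (prod_in x v Hx)].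
    rewrite (Hux x Hx). apply Z.divide_mul_r. auto.
  - intros d Hd Hall.
    assert (Hdg : (d * g | g)%Z).
    { apply gcd_with_greatest. apply Z.divide_0_r.
      intros x Hx. destruct (Hall (x / g)%Z (in_map _ _ _ Hx)) as [r Hr].
      exists r. rewrite (Hux x Hx), Hr. ring. }
    apply Z.divide_pos_le in Hdg; auto. nia.
Qed.
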